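(* Let $N\ge 2$ be an integer and let $\boldsymbol{A}=(A_1,\dots,A_N)$, $\boldsymbol{B}=(B_1,\dots,B_N)$ be probability vectors ($A_i,B_i\ge 0$, $\sum_iA_i=\sum_iB_i=1$), and put $S_i=A_i+B_i$. If $S_i>1$ for some $i$, then no joint selection probability matrix achieves loss $L=0$. Moreover, if $\max_i S_i=S_N>1$, then $$L_{\min}=\frac{N}{2(N-1)}(S_N-1)^2,$$ and this minimum is attained by the matrix $\tilde{\boldsymbol P}=(\tilde p_{i,j})$ given by $\tilde p_{i,j}=0$ if $i\ne N$ and $j\ne N$, $\tilde p_{i,N}=A_i+\epsilon$ for $i=1,\dots,N-1$, $\tilde p_{N,j}=B_j+\epsilon$ for $j=1,\dots,N-1$, $\tilde p_{N,N}=0$, where $\epsilon=\frac{S_N-1}{2(N-1)}$.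
   Context: A joint selection probability matrix is an $N\times N$ real matrix $\boldsymbol{P}=(p_{i,j})$ with $p_{i,i}=0$ for all $i$, $p_{i,j}\ge 0$ for all $i,j$, and $\sum_{i,j}p_{i,j}=1$. The satisfied preferences are $\pi_A(i)=\sum_j p_{i,j}$ and $\pi_B(j)=\sum_i p_{i,j}$, the loss is $L(\boldsymbol P)=\sum_i(\pi_A(i)-A_i)^2+\sum_j(\pi_B(j)-B_j)^2$, and $L_{\min}$ is the minimum of $L$ over all joint selection probability matrices. *)

(* Defs.v *)
From mathcomp Require Import all_boot all_order all_algebra.
From mathcomp Require Import reals.
Set Implicit Arguments. Unset Strict Implicit. Unset Printing Implicit Defensive.
Import Order.TTheory GRing.Theory Num.Theory.
Local Open Scope ring_scope.

Definition prob_vec (R : realType) (N : nat) (A : 'I_N -> R) : Prop :=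
  (forall i, 0 <= A i) /\ \sum_i A i = 1.

Definition jsp_matrix (R : realType) (N : nat) (P : 'M[R]_N) : Prop :=
  (forall i, P i i = 0) /\ (forall i j, 0 <= P i j) /\ \sum_i \sum_j P i j = 1.

Definition piA (R : realType) (N : nat) (P : 'M[R]_N) (i : 'I_N) : R :=
  \sum_j P i j.
Definition piB (R : realType) (N : nat) (P : 'M[R]_N) (j : 'I_N) : R :=
  \sum_i P i j.

Definition loss (R : realType) (N : nat) (A B : 'I_N -> R) (P : 'M[R]_N) : R :=
  \sum_i (piA P i - A i) ^+ 2 + \sum_j (piB P j - B j) ^+ 2.

(* the matrix P~ of the paper, with iN the last index N *)
Definition Ptilde (R : realType) (N : nat) (A B : 'I_N -> R) (iN : 'I_N) : 'M[R]_N :=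
  let eps := (A iN + B iN - 1) / (2 * (N%:R - 1)) in
  \matrix_(i, j)
    if (i != iN) && (j != iN) then 0
    else if (i != iN) && (j == iN) then A i + eps
    else if (i == iN) && (j != iN) then B j + eps
    else 0.

(* Main.v *)
Require Import Defs.
From mathcomp Require Import all_boot all_order all_algebra.
From mathcomp Require Import reals ring lra.
Import Order.TTheory GRing.Theory Num.Theory.
Local Open Scope ring_scope.

Lemma sum_const_ne {R : realType} {N} (i0 : 'I_N) (c : R) :
  \sum_(i < N | i != i0) c = (N%:R - 1) * c.
Proof.
have H : \sum_(i < N) c = c + \sum_(i < N | i != i0) c by rewrite (bigD1 i0).
rewrite sumr_const card_ord -mulr_natr in H.
rewrite mulrBl mul1r mulrC; lra.
Qed.

Lemma cs_bound {R : realType} {N} (i0 : 'I_N) (d : 'I_N -> R) (m : R) :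
  2 * m * (\sum_(i | i != i0) d i) - (N%:R - 1) * m ^+ 2 <= \sum_(i | i != i0) d i ^+ 2.
Proof.
have H : 0 <= \sum_(i | i != i0) (d i - m) ^+ 2 by apply: sumr_ge0 => i _; exact: sqr_ge0.
have E : \sum_(i | i != i0) (d i - m) ^+ 2 =
   \sum_(i | i != i0) d i ^+ 2 - 2 * m * (\sum_(i | i != i0) d i) + \sum_(i < N | i != i0) m ^+ 2.
  rewrite (eq_bigr (fun i => d i ^+ 2 - 2 * m * d i + m ^+ 2)); last by move=> i _; ring.
  by rewrite big_split /= sumrB mulr_sumr.
rewrite E sum_const_ne in H; lra.
Qed.

Lemma rowcol {R : realType} {N} (P : 'M[R]_N) i : jsp_matrix P -> piA P i + piB P i <= 1.
Proof.
move=> [Hd [Hp Hs]]; rewrite /piA /piB.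
rewrite (bigD1 i) //= in Hs.
rewrite [\sum_(k < N) P k i](bigD1 i) //= Hd add0r -Hs lerD2l.
apply: ler_sum => k _; rewrite (bigD1 i) //= -[leLHS]addr0 lerD2l.
by apply: sumr_ge0.
Qed.

Definition epsN {R : realType} {N} (A B : 'I_N -> R) iN := (A iN + B iN - 1) / (2 * (N%:R - 1)).

Lemma Pt_entry {R : realType} {N} (A B : 'I_N -> R) iN i j :
  Ptilde A B iN i j = if i == iN then (if j == iN then 0 else B j + epsN A B iN)
                      else (if j == iN then A i + epsN A B iN else 0).
Proof. by rewrite /Ptilde mxE; case: (i == iN); case: (j == iN). Qed.

Lemma sq_le_sum {R : realType} {N} (f : 'I_N -> R) i : f i ^+ 2 <= \sum_j f j ^+ 2.
Proof.
rewrite (bigD1 i) //= -[leLHS]addr0 lerD2l.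
by apply: sumr_ge0 => j _; exact: sqr_ge0.
Qed.

Lemma sumA1 {R : realType} {N} (P : 'M[R]_N) : jsp_matrix P -> \sum_i piA P i = 1.
Proof. by case=> _ [_ H]. Qed.

Lemma sumB1 {R : realType} {N} (P : 'M[R]_N) : jsp_matrix P -> \sum_i piB P i = 1.
Proof. by case=> _ [_ H]; rewrite /piB exchange_big. Qed.

Lemma split_loss {R : realType} {N} (A B : 'I_N -> R) (P : 'M[R]_N) iN :
  loss A B P = (piA P iN - A iN) ^+ 2 + \sum_(i | i != iN) (piA P i - A i) ^+ 2
     + ((piB P iN - B iN) ^+ 2 + \sum_(i | i != iN) (piB P i - B i) ^+ 2).
Proof. by rewrite /loss (bigD1 iN) //= [X in _ + X](bigD1 iN). Qed.

Lemma sum_ne_diff {R : realType} {N} (f g : 'I_N -> R) iN :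
  \sum_i f i = 1 -> \sum_i g i = 1 ->
  \sum_(i | i != iN) (f i - g i) = g iN - f iN.
Proof.
rewrite (bigD1 iN) //= => Hf; rewrite (bigD1 iN) //= => Hg.
rewrite sumrB; lra.
Qed.

Lemma piA_Pt_N {R : realType} {N} (A B : 'I_N -> R) iN :
  piA (Ptilde A B iN) iN = \sum_(j | j != iN) (B j + epsN A B iN).
Proof.
rewrite /piA (bigD1 iN) //= Pt_entry !eqxx add0r; apply: eq_bigr => j /negbTE Hj.
by rewrite Pt_entry eqxx Hj.
Qed.

Lemma piB_Pt_N {R : realType} {N} (A B : 'I_N -> R) iN :
  piB (Ptilde A B iN) iN = \sum_(j | j != iN) (A j + epsN A B iN).
Proof.
rewrite /piB (bigD1 iN) //= Pt_entry !eqxx add0r; apply: eq_bigr => j /negbTE Hj.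
by rewrite Pt_entry eqxx Hj.
Qed.

Lemma piA_Pt_ne {R : realType} {N} (A B : 'I_N -> R) iN i :
  i != iN -> piA (Ptilde A B iN) i = A i + epsN A B iN.
Proof.
move=> /negbTE Hi; rewrite /piA (bigD1 iN) //= Pt_entry Hi eqxx big1 ?addr0 //.
by move=> j /negbTE Hj; rewrite Pt_entry Hi Hj.
Qed.

Lemma piB_Pt_ne {R : realType} {N} (A B : 'I_N -> R) iN i :
  i != iN -> piB (Ptilde A B iN) i = B i + epsN A B iN.
Proof.
move=> /negbTE Hi; rewrite /piB (bigD1 iN) //= Pt_entry Hi eqxx big1 ?addr0 //.
by move=> j /negbTE Hj; rewrite Pt_entry Hi Hj.
Qed.

Lemma sum_ne_add {R : realType} {N} (f : 'I_N -> R) iN c :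
  \sum_i f i = 1 -> \sum_(i | i != iN) (f i + c) = 1 - f iN + (N%:R - 1) * c.
Proof.
rewrite (bigD1 iN) //= => H; rewrite big_split /= sum_const_ne; lra.
Qed.

Theorem theorem2p2 (R : realType) (N : nat) (A B : 'I_N -> R) :
  (2 <= N)%N -> prob_vec A -> prob_vec B ->
  ((exists i, A i + B i > 1) ->
     forall P : 'M[R]_N, jsp_matrix P -> loss A B P != 0)
  /\
  (forall iN : 'I_N, val iN = N.-1 ->
     (forall i, A i + B i <= A iN + B iN) -> A iN + B iN > 1 ->
     let Lmin := N%:R / (2 * (N%:R - 1)) * (A iN + B iN - 1) ^+ 2 in
     jsp_matrix (Ptilde A B iN) /\
     loss A B (Ptilde A B iN) = Lmin /\
     (forall P : 'M[R]_N, jsp_matrix P -> Lmin <= loss A B P)).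
Proof.
move=> HN [HA0 HA1] [HB0 HB1]; split.
  move=> [i Hi] P HP; rewrite lt0r_neq0 //.
  have H1 := @rowcol R N P i HP.
  have H2 := @sq_le_sum R N (fun i => piA P i - A i) i.
  have H3 := @sq_le_sum R N (fun i => piB P i - B i) i.
  rewrite /loss; apply: (lt_le_trans _ (lerD H2 H3)) => /=.
  set x := piA P i - A i; set y := piB P i - B i. have : x + y < 0 by rewrite /x /y; lra. clearbody x y => h. have h2 : 0 < (x + y) * (x + y) by nra. nra.
move=> iN _ _ Hs Lmin.
have Nge2 : 2 <= N%:R :> R by rewrite (ler_nat R 2 N).
set k := (N%:R - 1 : R).
have kpos : 0 < k by rewrite /k; lra.
set e := epsN A B iN.
have He : 2 * k * e = A iN + B iN - 1.
  rewrite /e /epsN -/k. clearbody k. field. lra.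
have epos : 0 < e by nra.
have HL : Lmin = 2 * k * (k + 1) * e ^+ 2.
  rewrite /Lmin /e /epsN -/k; have -> : N%:R = k + 1 :> R by rewrite /k; ring.
  clearbody k. field. lra.
have kE : N%:R - 1 = k by [].
rewrite HL; split; last split.
- split; [|split].
  + by move=> i; rewrite Pt_entry; case: eqP => // ->; rewrite eqxx.
  + move=> i j; rewrite Pt_entry; case: (i == iN); case: (j == iN) => //;
      apply: addr_ge0 => //; exact: ltW.
  + change (\sum_i piA (Ptilde A B iN) i = 1).
    rewrite (bigD1 iN) //= piA_Pt_N sum_ne_add // -/e kE.
    rewrite (eq_bigr (fun i => A i + e)); last by move=> i Hi; rewrite piA_Pt_ne.
    rewrite sum_ne_add // kE; lra.
- rewrite (split_loss A B _ iN) piA_Pt_N piB_Pt_N !sum_ne_add // -/e kE.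
  rewrite (eq_bigr (fun i => e ^+ 2)); last by move=> i Hi; rewrite piA_Pt_ne // addrC addKr.
  rewrite [X in _ + (_ + X)](eq_bigr (fun i => e ^+ 2)); last by move=> i Hi; rewrite piB_Pt_ne // addrC addKr.
  rewrite !sum_const_ne kE.
  have -> : 1 - B iN + k * e - A iN = - (k * e) by lra.
  have -> : 1 - A iN + k * e - B iN = - (k * e) by lra.
  ring.
move=> P HP.
rewrite (split_loss A B P iN).
have Ha := sum_ne_diff _ _ iN (sumA1 _ HP) HA1.
have Hb := sum_ne_diff _ _ iN (sumB1 _ HP) HB1.
have Ca := cs_bound iN (fun i => piA P i - A i) e.
have Cb := cs_bound iN (fun i => piB P i - B i) e.
rewrite /= Ha kE in Ca; rewrite /= Hb kE in Cb.
have H1 := @rowcol R N P iN HP.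
move: Ca Cb H1.
set SA := \sum_(i | _) _; set SB := \sum_(i | _) _.
set a := piA P iN; set b := piB P iN.
clearbody SA SB a b k e => Ca Cb H1.
set x := A iN - a; set y := B iN - b.
have hxy : 2 * k * e <= x + y by rewrite /x /y; lra.
have h1 : 0 <= (x + y - 2 * k * e) * (x + y + 2 * k * e + 4 * e).
  apply: mulr_ge0; nra.
have h2 := sqr_ge0 (x - y).
rewrite /x /y in hxy h1 h2. nra.
Qed.
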